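(* Let $d$ be a prime, $n\ge 1$, $0\le k\le n$, and let $L\subset\mathbb{F}_d^{2n}$ be a subspace with $L\subset L^{\perp}$ and $\dim L=n-k$. Fix hyperbolic pairs $(g_1,h_1),\dots,(g_n,h_n)$ adapted to $L$, a unit vector $\ket{\overline{0^n}}$, the resulting code subspaces $\mathcal{C}^{(s)}$, $s\in\mathbb{F}_d^{n-k}$, coset representatives $\hat{x}(t)$, $t\in\mathbb{F}_d^{n-k}$, and the maps $\mathcal{R}^{(s,t)}$, all as described in the context. Let $P_n$ be a probability distribution on $\mathbb{F}_d^{2n}$ and let $\mathcal{A}:\mathcal{B}(\mathcal{H}^{\otimes n})\to\mathcal{B}(\mathcal{H}^{\otimes n})$ be the channel $\sigma\mapsto\sum_{x\in\mathbb{F}_d^{2n}}P_n(x)N_x\sigma N_x^{\dagger}$. Then for all $s,t\in\mathbb{F}_d^{n-k}$, $$F_{\rm e}\big(\pi_{\mathcal{C}^{(s)}},\ \mathcal{R}^{(s,t)}\mathcal{A}\big)=P_n\big(\hat{x}(t)+L\big)=\sum_{x\in\hat{x}(t)+L}P_n(x).$$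
   Context: $\mathcal{H}$ is a Hilbert space of prime dimension $d$ with orthonormal basis $\ket{0},\dots,\ket{d-1}$ indexed by $\mathbb{F}_d=\mathbb{Z}/d\mathbb{Z}$; $\omega$ is a primitive $d$-th root of unity. Define unitaries $X\ket{a}=\ket{a-1}$, $Z\ket{a}=\omega^a\ket{a}$, and for $(a,b)\in\mathbb{F}_d^2$ put $N_{(a,b)}=i^{ab}X^aZ^b$ if $d=2$ (with $i=\sqrt{-1}$) and $N_{(a,b)}=X^aZ^b$ if $d>2$. Identify $((x_1,z_1),\dots,(x_n,z_n))$ with $y=(x_1,z_1,\dots,x_n,z_n)\in\mathbb{F}_d^{2n}$ and set $N_y=N_{(x_1,z_1)}\otimes\cdots\otimes N_{(x_n,z_n)}$ on $\mathcal{H}^{\otimes n}$. The symplectic form is $\langle y,y'\rangle=\sum_{i=1}^n(x_iz_i'-z_ix_i')$, and $L^{\perp}=\{y:\langle x,y\rangle=0\ \forall x\in L\}$. Hyperbolic pairs adapted to $L$: vectors $g_1,\dots,g_n,h_1,\dots,h_n\in\mathbb{F}_d^{2n}$ with $g_1,\dots,g_{n-k}$ a basis of $L$ and $\langle g_i,h_j\rangle=\delta_{ij}$, $\langle g_i,g_j\rangle=0$, $\langle h_i,h_j\rangle=0$ for all $i,j$. Let $\ket{\overline{0^n}}$ be a unit vector with $N_{g_i}\ket{\overline{0^n}}=\ket{\overline{0^n}}$ for $i=1,\dots,n$, and for $l\in\mathbb{F}_d^n$ let $\ket{\overline{l}}=\prod_{i=1}^n(N_{h_i})^{l_i}\ket{\overline{0^n}}$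 (these form an orthonormal basis of $\mathcal{H}^{\otimes n}$). For $s\in\mathbb{F}_d^{n-k}$, $\mathcal{C}^{(s)}=\mathrm{span}\{\ket{\overline{(s,u)}}:u\in\mathbb{F}_d^k\}$, $\Pi_s$ is the orthogonal projection onto $\mathcal{C}^{(s)}$, and $\pi_{\mathcal{C}^{(s)}}=\Pi_s/d^k$. For each $t\in\mathbb{F}_d^{n-k}$, $\hat{x}(t)$ is a chosen element of the coset $\{x\in\mathbb{F}_d^{2n}:\langle g_i,x\rangle=t_i,\ i=1,\dots,n-k\}$ of $L^{\perp}$. For $s,t\in\mathbb{F}_d^{n-k}$, $\mathcal{R}^{(s,t)}$ is the completely positive map $\sigma\mapsto R_t^{(s)}\sigma R_t^{(s)\dagger}$ with $R_t^{(s)}=N_{\hat{x}(t)}^{\dagger}\Pi_{t+s}$. $F_{\rm e}$ denotes the (unnormalized) entanglement fidelity: for a density operator $\rho$ and a completely positive map $\mathcal{E}$ with Kraus operators $E_j$, $F_{\rm e}(\rho,\mathcal{E})=\sum_j|\mathrm{tr}(\rho E_j)|^2$. Composition $\mathcal{M}\mathcal{L}$ means $\sigma\mapsto\mathcal{M}(\mathcal{L}(\sigma))$. *)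

(* Defs.v *)
From HB Require Import structures.
From mathcomp Require Import all_boot all_order all_algebra.
Set Implicit Arguments. Unset Strict Implicit. Unset Printing Implicit Defensive.
Import Order.TTheory GRing.Theory Num.Theory.
Local Open Scope ring_scope.

(* A vector y = ((x_1,z_1),...,(x_n,z_n)) of F_d^{2n} is stored as the
   n x 2 matrix whose i-th row is (x_i, z_i). *)
Definition pvec (d n : nat) := 'M['F_d]_(n, 2).
Definition xc (d n : nat) (y : pvec d n) (i : 'I_n) : 'F_d := y i ord0.
Definition zc (d n : nat) (y : pvec d n) (i : 'I_n) : 'F_d := y i ord_max.

Definition symp (d n : nat) (y y' : pvec d n) : 'F_d :=
  \sum_(i < n) (xc y i * zc y' i - zc y i * xc y' i).

(* basis of H^{(x)n}: |a_1 ... a_n>, a : F_d^n *)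
Definition bidx (d n : nat) := 'rV['F_d]_n.
Definition op (C : numClosedFieldType) (d n : nat) := 'M[C]_#|bidx d n|.
Definition vec (C : numClosedFieldType) (d n : nat) := 'cV[C]_#|bidx d n|.

Definition adj (C : numClosedFieldType) m p (A : 'M[C]_(m, p)) : 'M[C]_(p, m) :=
  (map_mx Num.conj A)^T.

(* single-qudit operators, rows/cols indexed by enum_rank of F_d *)
Definition Xq (C : numClosedFieldType) (d : nat) : 'M[C]_#|'F_d| :=
  \matrix_(r, c) ((enum_val r == enum_val c - 1) %:R).   (* X|c> = |c-1> *)
Definition Zq (C : numClosedFieldType) (d : nat) (w : C) : 'M[C]_#|'F_d| :=
  \matrix_(r, c) ((r == c)%:R * w ^+ (val (enum_val c))).
Definition Nq (C : numClosedFieldType) (d : nat) (w : C) (a b : 'F_d) : 'M[C]_#|'F_d| :=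
  (if d == 2 then 'i ^+ (val a * val b) else 1) *:
    (Xq C d ^+ val a *m Zq d w ^+ val b).

Definition tens (C : numClosedFieldType) (d n : nat) (A : 'I_n -> 'M[C]_#|'F_d|)
  : op C d n :=
  \matrix_(r, c) \prod_(k < n)
     A k (enum_rank ((enum_val r : bidx d n) 0 k)) (enum_rank ((enum_val c : bidx d n) 0 k)).

Definition Nop (C : numClosedFieldType) (d n : nat) (w : C) (y : pvec d n) : op C d n :=
  tens (fun i => Nq w (xc y i) (zc y i)).

Definition ketl (C : numClosedFieldType) (d n : nat) (w : C) (h : 'I_n -> pvec d n)
  (v0 : vec C d n) (l : 'rV['F_d]_n) : vec C d n :=
  (\prod_(i < n) Nop w (h i) ^+ val (l 0 i)) *m v0.

(* l = (s,u) for some u in F_d^k : the first n-k coordinates of l are s *)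
Definition codel (d n k : nat) (s : 'rV['F_d]_(n - k)) (l : 'rV['F_d]_n) : Prop :=
  forall i : 'I_(n - k), l 0 (widen_ord (leq_subr k n) i) = s 0 i.

Definition orth_proj_onto (C : numClosedFieldType) m (P : 'M[C]_m) (S : 'cV[C]_m -> Prop) : Prop :=
  (forall v, S v -> P *m v = v) /\
  (forall u : 'cV[C]_m, (forall v, S v -> adj v *m u = 0) -> P *m u = 0).

(* unnormalized entanglement fidelity of a CP map given by Kraus operators E_j *)
Definition Fe (C : numClosedFieldType) m (rho : 'M[C]_m) (I : finType) (E : I -> 'M[C]_m) : C :=
  \sum_(j : I) `|\tr (rho *m E j)| ^+ 2.

(* Kraus operators of the composition M L : sigma |-> M (L sigma) *)
Definition kcomp (C : numClosedFieldType) m (I J : finType)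
  (M : I -> 'M[C]_m) (L : J -> 'M[C]_m) : I * J -> 'M[C]_m :=
  fun p => M p.1 *m L p.2.

(* the Pauli channel A : sigma |-> sum_x P(x) N_x sigma N_x^dagger, via its
   Kraus operators sqrt(P x) N_x *)
Definition pauli_kraus (C : numClosedFieldType) (d n : nat) (w : C) (P : pvec d n -> C)
  : pvec d n -> op C d n :=
  fun x => sqrtC (P x) *: Nop w x.

(* Main.v *)
Require Import Defs.
From HB Require Import structures.
From mathcomp Require Import all_boot all_order all_algebra.
From mathcomp Require Import ring.
Set Implicit Arguments. Unset Strict Implicit. Unset Printing Implicit Defensive.
Import Order.TTheory GRing.Theory Num.Theory.
Local Open Scope ring_scope.


Section Fd.
Variables (d : nat) (Hd : prime d).
Let dE : (Zp_trunc (pdiv d)).+2 = d := Fp_cast Hd.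
Lemma valD (a b : 'F_d) : val (a + b) = ((val a + val b) %% d)%N.
Proof. transitivity ((val a + val b) %% (Zp_trunc (pdiv d)).+2)%N => //. by congr (_ %% _)%N. Qed.
Lemma valM (a b : 'F_d) : val (a * b) = ((val a * val b) %% d)%N.
Proof. transitivity ((val a * val b) %% (Zp_trunc (pdiv d)).+2)%N => //. by congr (_ %% _)%N. Qed.
Lemma val1 : val (1 : 'F_d) = 1%N.
Proof. by []. Qed.
Lemma ltv (a : 'F_d) : (val a < d)%N.
Proof. have := ltn_ord a. by rewrite {2}dE. Qed.
Lemma natrF (a : 'F_d) : (val a)%:R = a.
Proof. exact: natr_Zp. Qed.
End Fd.

Section Eps.
Variables (C : numClosedFieldType) (d : nat) (w : C) (Hd : prime d) (Hw : d.-primitive_root w).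
Definition eps (a : 'F_d) : C := w ^+ val a.

Lemma wmod m : w ^+ (m %% d) = w ^+ m.
Proof. exact: prim_expr_mod. Qed.
Lemma epsD a b : eps (a + b) = eps a * eps b.
Proof. by rewrite /eps (valD Hd) wmod exprD. Qed.
Lemma eps0 : eps 0 = 1.
Proof. by rewrite /eps expr0. Qed.
Lemma epsM a b : eps (a * b) = w ^+ (val a * val b).
Proof. by rewrite /eps (valM Hd) wmod. Qed.
Lemma eps1 : eps 1 = w.
Proof. by rewrite /eps val1 expr1. Qed.
Lemma eps_eq1 a : (eps a == 1) = (a == 0).
Proof.
rewrite /eps -(prim_order_dvd Hw).
case: eqP => [->|Ha]; first by rewrite dvdn0.
apply/negP => H; apply: Ha; apply: val_inj => /=.
by move: H; rewrite /dvdn modn_small ?(ltv Hd) // => /eqP.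
Qed.
Lemma normw : `|w| = 1.
Proof.
have d0 : (0 < d)%N by apply: prime_gt0.
apply/eqP; rewrite -(pexpr_eq1 d0) // -normrX (prim_expr_order Hw) normr1 //.
Qed.
Lemma norm_eps a : `|eps a| = 1.
Proof. by rewrite /eps normrX normw expr1n. Qed.
Lemma eps_neq0 a : eps a != 0.
Proof. by rewrite -normr_eq0 norm_eps oner_eq0. Qed.
Lemma conj_eps a : (eps a)^* = eps (- a).
Proof.
apply: (mulIf (eps_neq0 a)).
rewrite -epsD addNr eps0 mulrC -normCK norm_eps expr1n //.
Qed.
Lemma eps_sum I (r : seq I) (P : pred I) (F : I -> 'F_d) :
  eps (\sum_(i <- r | P i) F i) = \prod_(i <- r | P i) eps (F i).
Proof. exact: (big_morph eps epsD eps0). Qed.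
End Eps.


Section Qudit.
Variables (C : numClosedFieldType) (d : nat) (w : C) (Hd : prime d) (Hw : d.-primitive_root w).
Local Notation ev := (@enum_val 'F_d predT).
Local Notation N := #|'F_d|.

Lemma evE (j : 'I_N) v : (ev j == v) = (j == enum_rank v).
Proof. by rewrite -(can_eq enum_valK) enum_rankK. Qed.

Lemma sum_ev (v : 'F_d) (F : 'I_N -> C) :
  \sum_j ((ev j == v)%:R * F j) = F (enum_rank v).
Proof.
rewrite (bigD1 (enum_rank v)) //= enum_rankK eqxx mul1r big1 ?addr0 // => j Hj.
by rewrite evE (negbTE Hj) mul0r.
Qed.

Lemma XqX m : Xq C d ^+ m = \matrix_(r, c) ((ev r == ev c - m%:R)%:R : C).
Proof.
elim: m => [|m IH].
  apply/matrixP => r c; rewrite expr0 !mxE subr0.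
  by rewrite (can_eq enum_valK).
rewrite exprS IH; apply/matrixP => r c; rewrite !mxE.
under eq_bigr => j _ do rewrite !mxE.
rewrite (bigD1 (enum_rank (ev c - m%:R))) //= big1 ?addr0.
  rewrite enum_rankK eqxx mulr1; congr (_%:R); congr (_ == _).
  by rewrite mulrS; ring.
by move=> j Hj; rewrite [ev j == _]evE (negbTE Hj) mulr0.
Qed.

Lemma ZqX m : Zq d w ^+ m = \matrix_(r, c) ((r == c)%:R * w ^+ (m * val (ev c))).
Proof.
elim: m => [|m IH].
  by apply/matrixP => r c; rewrite expr0 !mxE mul0n expr0 mulr1.
rewrite exprS IH; apply/matrixP => r c; rewrite !mxE.
under eq_bigr => j _ do rewrite !mxE.
rewrite (bigD1 c) //= big1 ?addr0.
  by rewrite eqxx mul1r -mulrA -exprD mulSn.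
by move=> j Hj; rewrite [(j == c)](negbTE Hj) mul0r mulr0.
Qed.

Definition kap (a b : 'F_d) : C := if d == 2 then 'i ^+ (val a * val b) else 1.

Lemma norm_kap a b : `|kap a b| = 1.
Proof. rewrite /kap; case: ifP => _; by rewrite ?normrX ?normCi ?expr1n ?normr1. Qed.
Lemma kap_neq0 a b : kap a b != 0.
Proof. by rewrite -normr_eq0 norm_kap oner_eq0. Qed.
Lemma kap0 : kap 0 0 = 1.
Proof. by rewrite /kap; case: ifP. Qed.

Lemma NqE a b : Nq (d:=d) w a b = \matrix_(r, c) (kap a b * ((ev r == ev c - a)%:R * eps w (b * ev c))).
Proof.
apply/matrixP => r c; rewrite /Nq XqX ZqX !mxE -/(kap a b); congr (_ * _).
under eq_bigr => j _ do rewrite !mxE.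
rewrite (bigD1 c) //= big1 ?addr0.
  by rewrite eqxx mul1r natrF (epsM Hd Hw).
by move=> j Hj; rewrite [(j == c)](negbTE Hj) mul0r mulr0.
Qed.

Lemma Nq_mulE a b a' b' : Nq (d:=d) w a b *m Nq (d:=d) w a' b' =
  \matrix_(r, c) (kap a b * kap a' b' * ((ev r == ev c - a' - a)%:R *
        (eps w (b * (ev c - a')) * eps w (b' * ev c)))).
Proof.
rewrite !NqE; apply/matrixP => r c; rewrite !mxE.
under eq_bigr => j _ do rewrite !mxE.
rewrite (bigD1 (enum_rank (ev c - a'))) //= big1 ?addr0.
  rewrite enum_rankK eqxx mul1r.
  by ring.
by move=> j Hj; rewrite [ev j == ev c - _]evE (negbTE Hj) !(mul0r, mulr0).
Qed.

Lemma Nq_comm a b a' b' : Nq (d:=d) w a b *m Nq (d:=d) w a' b' =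
  eps w (a * b' - b * a') *: (Nq (d:=d) w a' b' *m Nq (d:=d) w a b).
Proof.
rewrite !Nq_mulE; apply/matrixP => r c; rewrite !mxE.
have -> : ev c - a - a' = ev c - a' - a by ring.
rewrite -!(epsD Hd Hw).
have -> : b * (ev c - a') + b' * ev c = (a * b' - b * a') + (b' * (ev c - a) + b * ev c) by ring.
rewrite !(epsD Hd Hw); ring.
Qed.

Definition cmul (a b a' b' : 'F_d) : C :=
  kap a b * kap a' b' / kap (a + a') (b + b') * eps w (- (b * a')).

Lemma norm_cmul a b a' b' : `|cmul a b a' b'| = 1.
Proof. by rewrite /cmul !normrM normfV !norm_kap (norm_eps Hd Hw) invr1 !mulr1. Qed.

Lemma Nq_mul a b a' b' : Nq (d:=d) w a b *m Nq (d:=d) w a' b' =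
  cmul a b a' b' *: Nq (d:=d) w (a + a') (b + b').
Proof.
rewrite Nq_mulE NqE; apply/matrixP => r c; rewrite !mxE.
have -> : ev c - (a + a') = ev c - a' - a by ring.
rewrite -!(epsD Hd Hw).
have -> : b * (ev c - a') + b' * ev c = - (b * a') + (b + b') * ev c by ring.
rewrite !(epsD Hd Hw) /cmul.
field. exact: kap_neq0.
Qed.

Lemma Nq_unit a b : adj (Nq (d:=d) w a b) *m Nq (d:=d) w a b = 1%:M.
Proof.
rewrite /adj NqE; apply/matrixP => r c; rewrite !mxE.
under eq_bigr => j _ do rewrite !mxE.
rewrite (bigD1 (enum_rank (ev r - a))) //= big1 ?addr0.
  rewrite enum_rankK eqxx (inj_eq (addIr _)) (inj_eq enum_val_inj).
  case: eqP => [->|_]; last by rewrite !(mul0r, mulr0, rmorph0).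
  rewrite !rmorphM /= conjC1 !mul1r mulrACA -!normCKC norm_kap (norm_eps Hd Hw) expr1n mulr1 //.
move=> j Hj; rewrite [ev j == ev r - a]evE (negbTE Hj).
by rewrite !(mul0r, mulr0, rmorph0).
Qed.

Lemma Nq00 : Nq (d:=d) w 0 0 = 1%:M.
Proof.
rewrite NqE; apply/matrixP => r c; rewrite !mxE kap0 subr0 mul0r eps0 mulr1 mul1r.
by rewrite (inj_eq enum_val_inj).
Qed.
End Qudit.


Section Tens.
Variables (C : numClosedFieldType) (d n : nat).
Local Notation M1 := 'M[C]_#|'F_d|.
Local Notation rho r k := (enum_rank ((enum_val r : bidx d n) 0 k)).

Definition hfun (m : 'I_#|bidx d n|) : {ffun 'I_n -> 'I_#|'F_d|} := [ffun k => rho m k].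
Definition hinv (f : {ffun 'I_n -> 'I_#|'F_d|}) : 'I_#|bidx d n| :=
  enum_rank (\row_k enum_val (f k) : bidx d n).

Lemma hfun_bij : bijective hfun.
Proof.
exists hinv => [m|f].
  rewrite /hinv /hfun -[RHS]enum_valK; congr enum_rank.
  by apply/rowP => k; rewrite !mxE ffunE enum_rankK.
by apply/ffunP => k; rewrite /hinv /hfun ffunE enum_rankK mxE enum_valK.
Qed.

Lemma tens_mul (A B : 'I_n -> M1) :
  tens (d:=d) A *m tens (d:=d) B = tens (d:=d) (fun i => A i *m B i).
Proof.
apply/matrixP => r c; rewrite !mxE.
under [RHS]eq_bigr => i _ do rewrite mxE.
rewrite bigA_distr_bigA /= (reindex hfun); last exact: onW_bij hfun_bij.
apply: eq_bigr => m _; rewrite !mxE -big_split /=.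
by apply: eq_bigr => i _; rewrite ffunE.
Qed.

Lemma tens_scale (c : 'I_n -> C) (A : 'I_n -> M1) :
  tens (d:=d) (fun i => c i *: A i) = (\prod_i c i) *: tens (d:=d) A.
Proof.
apply/matrixP => r s; rewrite !mxE -big_split /=.
by apply: eq_bigr => i _; rewrite mxE.
Qed.

Lemma tens1 : tens (d:=d) (fun _ : 'I_n => 1%:M : M1) = 1%:M.
Proof.
apply/matrixP => r c; rewrite !mxE.
case: (eqVneq r c) => [->|Hrc].
  by rewrite big1 // => i _; rewrite mxE eqxx.
have [i Hi] : exists i, (enum_val r : bidx d n) 0 i != (enum_val c : bidx d n) 0 i.
  apply/existsP; apply: contraR Hrc; rewrite negb_exists => /forallP H.
  rewrite -(inj_eq enum_val_inj); apply/eqP/matrixP => i0 i.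
  by rewrite (ord1 i0); have /negPn/eqP := H i.
rewrite (bigD1 i) //= mxE (inj_eq enum_rank_inj) (negbTE Hi) mul0r //.
Qed.

Lemma hadjM m p q (A : 'M[C]_(m, p)) (B : 'M[C]_(p, q)) : adj (A *m B) = adj B *m adj A.
Proof. by rewrite /adj map_mxM trmx_mul. Qed.
Lemma hadjZ m p (a : C) (A : 'M[C]_(m, p)) : adj (a *: A) = a^* *: adj A.
Proof. by apply/matrixP => i j; rewrite !mxE rmorphM. Qed.
Lemma hadjK m p (A : 'M[C]_(m, p)) : adj (adj A) = A.
Proof. by apply/matrixP => i j; rewrite !mxE conjCK. Qed.
Lemma hadjD m p (A B : 'M[C]_(m, p)) : adj (A + B) = adj A + adj B.
Proof. by apply/matrixP => i j; rewrite !mxE rmorphD. Qed.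
Lemma hadj0 m p : adj (0 : 'M[C]_(m, p)) = 0.
Proof. by apply/matrixP => i j; rewrite !mxE rmorph0. Qed.
Lemma hadj_sum m p I (r : seq I) (P : pred I) (F : I -> 'M[C]_(m, p)) :
  adj (\sum_(i <- r | P i) F i) = \sum_(i <- r | P i) adj (F i).
Proof. exact: (big_morph _ (@hadjD m p) (@hadj0 m p)). Qed.
Lemma hadj1 m : adj (1%:M : 'M[C]_m) = 1%:M.
Proof. by apply/matrixP => i j; rewrite !mxE eq_sym rmorph_nat. Qed.

Lemma tens_adj (A : 'I_n -> M1) : adj (tens (d:=d) A) = tens (d:=d) (fun i => adj (A i)).
Proof.
apply/matrixP => r c; rewrite !mxE rmorph_prod.
by apply: eq_bigr => i _; rewrite !mxE.
Qed.
End Tens.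


Section Symp.
Variables (d n : nat).
Local Notation pv := (pvec d n).
Lemma sympC (y y' : pv) : symp y y' = - symp y' y.
Proof. rewrite /symp -sumrN; apply: eq_bigr => i _; ring. Qed.
Lemma sympDr (y u v : pv) : symp y (u + v) = symp y u + symp y v.
Proof. rewrite /symp /xc /zc -big_split; apply: eq_bigr => i _ /=; rewrite !mxE; ring. Qed.
Lemma sympZr (y u : pv) a : symp y (a *: u) = a * symp y u.
Proof. rewrite /symp /xc /zc mulr_sumr; apply: eq_bigr => i _ /=; rewrite !mxE; ring. Qed.
Lemma symp0r (y : pv) : symp y 0 = 0.
Proof. by rewrite -(scale0r 0) sympZr mul0r. Qed.
Lemma sympNr (y u : pv) : symp y (- u) = - symp y u.
Proof. by rewrite -scaleN1r sympZr mulN1r. Qed.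
Lemma sympBr (y u v : pv) : symp y (u - v) = symp y u - symp y v.
Proof. by rewrite sympDr sympNr. Qed.
Lemma symp_sumr (y : pv) I (r : seq I) (P : pred I) (F : I -> pv) :
  symp y (\sum_(i <- r | P i) F i) = \sum_(i <- r | P i) symp y (F i).
Proof. exact: (big_morph _ (sympDr y) (symp0r y)). Qed.
Lemma sympDl (y u v : pv) : symp (u + v) y = symp u y + symp v y.
Proof. by rewrite sympC sympDr opprD -!sympC. Qed.
Lemma sympZl (y u : pv) a : symp (a *: u) y = a * symp u y.
Proof. by rewrite sympC sympZr -mulrN -sympC. Qed.
Lemma symp_suml (y : pv) I (r : seq I) (P : pred I) (F : I -> pv) :
  symp (\sum_(i <- r | P i) F i) y = \sum_(i <- r | P i) symp (F i) y.
Proof. rewrite sympC symp_sumr -sumrN; apply: eq_bigr => i _; by rewrite -sympC. Qed.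
End Symp.

Section NopS.
Variables (C : numClosedFieldType) (d n : nat) (w : C) (Hd : prime d) (Hw : d.-primitive_root w).
Local Notation pv := (pvec d n).
Local Notation NOP := (@Nop C d n w).

Lemma eq_tens (A B : 'I_n -> 'M[C]_#|'F_d|) : (forall i, A i = B i) -> tens (d:=d) A = tens (d:=d) B.
Proof. move=> H; apply/matrixP => r c; rewrite !mxE; apply: eq_bigr => i _; by rewrite H. Qed.

Lemma Nop_comm (y y' : pv) : NOP y *m NOP y' = eps w (symp y y') *: (NOP y' *m NOP y).
Proof.
rewrite /Nop !tens_mul (eq_tens (fun i => Nq_comm Hd Hw _ _ _ _)) tens_scale.
by rewrite /symp (eps_sum Hd Hw).
Qed.

Definition cmulN (y y' : pv) : C := \prod_i cmul w (xc y i) (zc y i) (xc y' i) (zc y' i).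

Lemma norm_cmulN y y' : `|cmulN y y'| = 1.
Proof. rewrite /cmulN normr_prod big1 // => i _; exact: (norm_cmul Hd Hw). Qed.
Lemma cmulN_neq0 y y' : cmulN y y' != 0.
Proof. by rewrite -normr_eq0 norm_cmulN oner_eq0. Qed.

Lemma Nop_mul (y y' : pv) : NOP y *m NOP y' = cmulN y y' *: NOP (y + y').
Proof.
rewrite /Nop !tens_mul (eq_tens (fun i => Nq_mul Hd Hw _ _ _ _)) tens_scale.
congr (_ *: _); apply: eq_tens => i; by rewrite /xc /zc !mxE.
Qed.

Lemma Nop_unit (y : pv) : adj (NOP y) *m NOP y = 1%:M.
Proof.
rewrite /Nop tens_adj tens_mul (eq_tens (fun i => Nq_unit Hd Hw _ _)) tens1 //.
Qed.
Lemma Nop_unit' (y : pv) : NOP y *m adj (NOP y) = 1%:M.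
Proof. exact: mulmx1C (Nop_unit y). Qed.

Lemma Nop0 : NOP 0 = 1%:M.
Proof.
rewrite /Nop -(@tens1 C d n); apply: eq_tens => i.
by rewrite /xc /zc !mxE (Nq00 Hd Hw).
Qed.
End NopS.


Section Gen.
Variables (C : numClosedFieldType) (N : nat).
Local Notation op := 'M[C]_N.

Lemma mulE (A B : op) : A * B = A *m B.
Proof. by []. Qed.

Lemma comm_exp (A B : op) (c : C) m : A *m B = c *: (B *m A) ->
  A *m B ^+ m = c ^+ m *: (B ^+ m *m A).
Proof.
move=> HAB; elim: m => [|m IH]; first by rewrite !expr0 mulmx1 mul1mx scale1r.
rewrite exprS mulE mulmxA HAB -scalemxAl -mulmxA IH.
by rewrite -scalemxAr scalerA -exprS mulmxA.
Qed.

Lemma comm_prod I (r : seq I) (A : op) (B : I -> op) (c : I -> C) :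
  (forall i, A *m B i = c i *: (B i *m A)) ->
  A *m \prod_(i <- r) B i = (\prod_(i <- r) c i) *: (\prod_(i <- r) B i *m A).
Proof.
move=> HAB; elim: r => [|i r IH]; first by rewrite !big_nil mulmx1 mul1mx scale1r.
rewrite !big_cons mulE mulmxA HAB -scalemxAl -mulmxA IH.
by rewrite -scalemxAr scalerA mulmxA.
Qed.

Definition unitary (U : op) := adj U *m U = 1%:M.

Lemma unitary1 : unitary 1%:M.
Proof. by rewrite /unitary hadj1 mulmx1. Qed.
Lemma unitaryM A B : unitary A -> unitary B -> unitary (A *m B).
Proof.
rewrite /unitary => HA HB; by rewrite hadjM mulmxA -(mulmxA (adj B)) HA mulmx1.
Qed.
Lemma unitaryX A m : unitary A -> unitary (A ^+ m).
Proof.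
move=> HA; elim: m => [|m IH]; first by rewrite expr0; exact: unitary1.
by rewrite exprS mulE; apply: unitaryM.
Qed.
Lemma unitary_prod I (r : seq I) (B : I -> op) :
  (forall i, unitary (B i)) -> unitary (\prod_(i <- r) B i).
Proof.
move=> HB; elim: r => [|i r IH]; first by rewrite big_nil; exact: unitary1.
by rewrite big_cons mulE; apply: unitaryM.
Qed.

Lemma eig_orth (U : op) (u v : 'cV[C]_N) (a b : C) :
  unitary U -> U *m u = a *: u -> U *m v = b *: v -> a^* * b != 1 ->
  adj u *m v = 0.
Proof.
move=> HU Hu Hv Hab.
have E : adj u *m v = (a^* * b) *: (adj u *m v).
  rewrite -{1}[v]mul1mx -HU -mulmxA mulmxA -hadjM Hu Hv hadjZ.
  by rewrite -scalemxAl -scalemxAr scalerA.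
apply/eqP; move/eqP: E; rewrite -subr_eq0 -{1}[adj u *m v]scale1r -scalerBl.
by rewrite scaler_eq0 subr_eq0 eq_sym (negbTE Hab).
Qed.
End Gen.


Section Code.
Variables (C : numClosedFieldType) (d n : nat) (w : C) (Hd : prime d) (Hw : d.-primitive_root w).
Variables (g h : 'I_n -> pvec d n).
Hypothesis Hgh : forall i j, symp (g i) (h j) = (i == j)%:R.
Variable v0 : vec C d n.
Hypothesis Hv0unit : adj v0 *m v0 = 1%:M.
Hypothesis Hv0stab : forall i, Nop (d:=d) (n:=n) w (g i) *m v0 = v0.
Local Notation G j := (Nop (d:=d) (n:=n) w (g j)).
Local Notation e := (ketl w h v0).

Lemma Nop_unitary y : unitary (Nop (d:=d) (n:=n) w y).
Proof. exact: (Nop_unit Hd Hw). Qed.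

Lemma G_e j l : G j *m e l = eps (d:=d) w (l 0 j) *: e l.
Proof.
rewrite /ketl mulmxA (@comm_prod _ _ _ _ _ (fun i => Nop (d:=d) (n:=n) w (h i) ^+ val (l 0 i))
     (fun i => eps (d:=d) w (symp (g j) (h i)) ^+ val (l 0 i))).
  rewrite -scalemxAl -mulmxA Hv0stab; congr (_ *: _).
  rewrite (bigD1 j) //= big1 ?mulr1.
    by rewrite Hgh eqxx (eps1 d w).
  by move=> i Hi; rewrite Hgh eq_sym (negbTE Hi) eps0 expr1n.
by move=> i; apply: comm_exp; apply: (Nop_comm Hd Hw).
Qed.

Lemma e_norm l : adj (e l) *m e l = 1%:M.
Proof.
rewrite /ketl hadjM mulmxA -(mulmxA (adj v0)).
rewrite (@unitary_prod _ _ _ _ (fun i => Nop (d:=d) (n:=n) w (h i) ^+ val (l 0 i))) ?mulmx1 //.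
by move=> i; apply: unitaryX; apply: Nop_unitary.
Qed.

Lemma row_neq (l l' : 'rV['F_d]_n) : l != l' -> exists j, l 0 j != l' 0 j.
Proof.
move=> H; apply/existsP; apply: contraR H; rewrite negb_exists => /forallP H.
apply/eqP/matrixP => i0 i; rewrite (ord1 i0).
by have /negPn/eqP := H i.
Qed.

Lemma eps_ne a b : a != b -> (eps (d:=d) w a)^* * eps (d:=d) w b != 1.
Proof.
move=> Hab; rewrite (conj_eps Hd Hw) -(epsD Hd Hw) (eps_eq1 Hd Hw).
by rewrite addrC subr_eq0 eq_sym.
Qed.

Lemma e_orth l l' : l != l' -> adj (e l') *m e l = 0.
Proof.
move=> H; have [j Hj] := row_neq H.
apply: (eig_orth (Nop_unitary (g j)) (G_e j l') (G_e j l)).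
by apply: eps_ne; rewrite eq_sym.
Qed.

Definition Emx : op C d n := \matrix_(r, c) e (enum_val c) r 0.

Lemma complete : \sum_l e l *m adj (e l) = 1%:M.
Proof.
have H1 : adj Emx *m Emx = 1%:M.
  apply/matrixP => c c'; rewrite !mxE.
  transitivity ((adj (e (enum_val c)) *m e (enum_val c')) 0 0).
    by rewrite !mxE; apply: eq_bigr => r _; rewrite !mxE.
  case: (eqVneq c c') => [->|Hc]; first by rewrite e_norm !mxE.
  rewrite e_orth ?mxE //.
  by rewrite (inj_eq enum_val_inj) eq_sym.
have H2 := mulmx1C H1.
rewrite -H2; apply/matrixP => r r'; rewrite summxE !mxE.
rewrite (reindex _ (onW_bij _ (enum_val_bij (bidx d n)))) /=.
apply: eq_bigr => c _; rewrite !mxE big_ord1 !mxE //.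
Qed.

Lemma joint (m : 'rV['F_d]_n) (v : vec C d n) : (forall j, G j *m v = eps (d:=d) w (m 0 j) *: v) ->
  v = e m *m (adj (e m) *m v).
Proof.
move=> Hv; rewrite -{1}[v]mul1mx -complete mulmx_suml (bigD1 m) //= big1 ?addr0.
  by rewrite mulmxA.
move=> l Hl; have [j Hj] := row_neq Hl.
rewrite -mulmxA (eig_orth (Nop_unitary (g j)) (G_e j l) (Hv j)) ?mulmx0 //.
exact: eps_ne.
Qed.

Definition sig (y : pvec d n) : 'rV['F_d]_n := \row_j symp (g j) y.

Lemma Nop_e y l : Nop (d:=d) (n:=n) w y *m e l = e (l + sig y) *m (adj (e (l + sig y)) *m (Nop (d:=d) (n:=n) w y *m e l)).
Proof.
apply: joint => j.
rewrite mulmxA (Nop_comm Hd Hw) -scalemxAl -mulmxA G_e -scalemxAr scalerA.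
by rewrite -(epsD Hd Hw) !mxE addrC.
Qed.
End Code.


Lemma delta_sum (K : pzRingType) n (a : 'I_n -> K) j :
  \sum_(j' < n) a j' * (j' == j)%:R = a j.
Proof.
rewrite (bigD1 j) //= eqxx mulr1 big1 ?addr0 // => i Hi.
by rewrite (negbTE Hi) mulr0.
Qed.
Lemma delta_sum' (K : pzRingType) n (a : 'I_n -> K) j :
  \sum_(j' < n) a j' * (j == j')%:R = a j.
Proof. by rewrite -(delta_sum a j); apply: eq_bigr => i _; rewrite eq_sym. Qed.

Section Span.
Variables (d n : nat) (Hd : prime d).
Variables (g h : 'I_n -> pvec d n).
Hypothesis Hgh : forall i j, symp (g i) (h j) = (i == j)%:R.
Hypothesis Hgg : forall i j, symp (g i) (g j) = 0.
Hypothesis Hhh : forall i j, symp (h i) (h j) = 0.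

Definition Fgh (i : 'I_(n + n)) : pvec d n :=
  match split i with inl j => g j | inr j => h j end.
Definition Xt := [tuple Fgh i | i < n + n].

Lemma XtL j : Xt`_(lshift n j) = g j.
Proof. by rewrite nth_mktuple /Fgh -[lshift n j]/(unsplit (inl j)) unsplitK. Qed.
Lemma XtR j : Xt`_(rshift n j) = h j.
Proof. by rewrite nth_mktuple /Fgh -[rshift n j]/(unsplit (inr j)) unsplitK. Qed.

Lemma symp_comb_h (a b : 'I_n -> 'F_d) j :
  symp (\sum_i a i *: g i + \sum_i b i *: h i) (h j) = a j.
Proof.
rewrite sympDl !symp_suml.
under eq_bigr => i _ do rewrite sympZl Hgh.
under [X in _ + X]eq_bigr => i _ do rewrite sympZl Hhh mulr0.
by rewrite [X in _ + X]big1 ?addr0 // delta_sum.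
Qed.
Lemma symp_comb_g (a b : 'I_n -> 'F_d) j :
  symp (g j) (\sum_i a i *: g i + \sum_i b i *: h i) = b j.
Proof.
rewrite sympDr !symp_sumr.
under eq_bigr => i _ do rewrite sympZr Hgg mulr0.
under [X in _ + X]eq_bigr => i _ do rewrite sympZr Hgh.
by rewrite big1 ?add0r // delta_sum'.
Qed.

Lemma Xt_free : free Xt.
Proof.
apply/freeP => c Hc i.
have {}Hc : \sum_j c (lshift n j) *: g j + \sum_j c (rshift n j) *: h j = 0.
  by rewrite -[X in _ = X]Hc big_split_ord; congr (_ + _); apply: eq_bigr => j _; rewrite ?XtL ?XtR.
case: (splitP i) => j Hij.
  have -> : i = lshift n j by apply: val_inj.
  by rewrite -(symp_comb_h (fun j => c (lshift n j)) (fun j => c (rshift n j)) j) Hc -(scale0r 0) sympZl mul0r.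
have -> : i = rshift n j by apply: val_inj.
by rewrite -(symp_comb_g (fun j => c (lshift n j)) (fun j => c (rshift n j)) j) Hc -(scale0r 0) sympZr mul0r.
Qed.

Lemma decomp (y : pvec d n) :
  y = \sum_j symp y (h j) *: g j + \sum_j symp (g j) y *: h j.
Proof.
have Hb : basis_of fullv Xt.
  rewrite basisEfree Xt_free subvf dimvf size_tuple /=. change (n * 2 <= n + n)%N. by rewrite muln2 addnn.
have := coord_basis Hb (memvf y).
rewrite big_split_ord /=.
under eq_bigr => j _ do rewrite XtL.
under [X in _ + X]eq_bigr => j _ do rewrite XtR.
set a := fun j => coord Xt (lshift n j) y.
set b := fun j => coord Xt (rshift n j) y.
move=> Ey.
have Ea : forall j, symp y (h j) = a j by move=> j; rewrite {1}Ey symp_comb_h.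
have Eb : forall j, symp (g j) y = b j by move=> j; rewrite {1}Ey symp_comb_g.
rewrite {1}Ey; congr (_ + _); apply: eq_bigr => j _; by rewrite ?Ea ?Eb.
Qed.
End Span.

Section InL.
Variables (d n k : nat) (Hd : prime d).
Variables (g h : 'I_n -> pvec d n).
Hypothesis Hgh : forall i j, symp (g i) (h j) = (i == j)%:R.
Hypothesis Hgg : forall i j, symp (g i) (g j) = 0.
Hypothesis Hhh : forall i j, symp (h i) (h j) = 0.
Variable L : {vspace pvec d n}.
Hypothesis Hgbasis : basis_of L [seq g (widen_ord (leq_subr k n) i) | i <- enum 'I_(n - k)].

Lemma gL (j : 'I_n) : (j < n - k)%N -> g j \in L.
Proof.
move=> Hj; move: Hgbasis => /andP [/eqP <- _]; apply: memv_span.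
apply/mapP; exists (Ordinal Hj); first by rewrite mem_enum.
by congr g; apply: val_inj.
Qed.

Lemma inL y : (y \in L) = [forall j, symp (g j) y == 0] &&
   [forall j : 'I_n, (n - k <= j)%N ==> (symp y (h j) == 0)].
Proof.
apply/idP/idP.
  move=> yL; move: Hgbasis => /andP [/eqP HL _]; rewrite -HL in yL.
  set Xg := [seq g (widen_ord (leq_subr k n) i) | i <- enum 'I_(n - k)] in yL.
  have Hy := coord_span (X := in_tuple Xg) yL.
  have HX : forall i : 'I_(size Xg), exists i' : 'I_(n - k), (in_tuple Xg)`_i = g (widen_ord (leq_subr k n) i').
    move=> i; have := mem_nth 0 (ltn_ord i); case/mapP => i' _ E; by exists i'.
  apply/andP; split; apply/forallP => j.
    rewrite Hy symp_sumr; apply/eqP; apply: big1 => i _.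
    by have [i' ->] := HX i; rewrite sympZr Hgg mulr0.
  apply/implyP => Hj.
  rewrite Hy symp_suml; apply/eqP; apply: big1 => i _.
  have [i' ->] := HX i; rewrite sympZl Hgh.
  suff -> : (widen_ord (leq_subr k n) i' == j) = false by rewrite mulr0.
  apply/negbTE; apply: contraTneq Hj => <- /=; by rewrite -ltnNge.
case/andP => /forallP Hg /forallP Hh.
rewrite (decomp Hgh Hgg Hhh y); apply: memvD; apply: memv_suml => j _.
  case: (ltnP j (n - k)) => Hj; first by apply: memvZ; apply: gL.
  by move/implyP: (Hh j) => /(_ Hj) /eqP ->; rewrite scale0r mem0v.
by move/eqP: (Hg j) => ->; rewrite scale0r mem0v.
Qed.
End InL.


Section Prods.
Variables (C : numClosedFieldType) (d n : nat) (w : C) (Hd : prime d) (Hw : d.-primitive_root w).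
Variables (g h : 'I_n -> pvec d n).
Hypothesis Hgh : forall i j, symp (g i) (h j) = (i == j)%:R.
Variable v0 : vec C d n.
Hypothesis Hv0stab : forall i, Nop (d:=d) (n:=n) w (g i) *m v0 = v0.
Local Notation NOP := (Nop (d:=d) (n:=n) w).
Local Notation e := (ketl w h v0).

Lemma Nop_exp (y : pvec d n) m : exists2 c : C, `|c| = 1 & NOP y ^+ m = c *: NOP (y *+ m).
Proof.
elim: m => [|m [c Hc IH]].
  by exists 1; rewrite ?normr1 // expr0 mulr0n (Nop0 _ Hd Hw) scale1r.
exists (c * cmulN w y (y *+ m)); first by rewrite normrM Hc (norm_cmulN Hd Hw) mulr1.
by rewrite exprS mulE IH -scalemxAr (Nop_mul Hd Hw) scalerA mulrS.
Qed.

Lemma Nop_prodg (r : seq 'I_n) (f : 'I_n -> 'F_d) : exists2 c : C, `|c| = 1 &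
  \prod_(j <- r) NOP (g j) ^+ val (f j) = c *: NOP (\sum_(j <- r) f j *: g j).
Proof.
elim: r => [|j r [c Hc IH]].
  by exists 1; rewrite ?normr1 // !big_nil (Nop0 _ Hd Hw) scale1r.
have [c' Hc' E] := Nop_exp (g j) (val (f j)).
exists (c' * c * cmulN w (g j *+ val (f j)) (\sum_(j <- r) f j *: g j)).
  by rewrite !normrM Hc Hc' (norm_cmulN Hd Hw) !mulr1.
rewrite !big_cons mulE IH E -scalemxAr -scalemxAl (Nop_mul Hd Hw) !scalerA.
by rewrite -scaler_nat natrF (mulrC c c').
Qed.

Lemma exp_e j m l : NOP (g j) ^+ m *m e l = eps w (l 0 j) ^+ m *: e l.
Proof.
elim: m => [|m IH]; first by rewrite !expr0 mul1mx scale1r.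
rewrite exprS mulE -mulmxA IH -scalemxAr (G_e Hd Hw Hgh Hv0stab) scalerA. by rewrite exprSr.
Qed.

Lemma prod_e (r : seq 'I_n) (f : 'I_n -> nat) l :
  (\prod_(j <- r) NOP (g j) ^+ f j) *m e l = (\prod_(j <- r) eps w (l 0 j) ^+ f j) *: e l.
Proof.
elim: r => [|j r IH]; first by rewrite !big_nil mul1mx scale1r.
rewrite !big_cons mulE -mulmxA IH -scalemxAr exp_e scalerA. by rewrite mulrC.
Qed.
End Prods.


Section Main.
Variables (C : numClosedFieldType) (d n k : nat) (w : C).
Hypotheses (Hd : prime d) (Hk : (k <= n)%N) (Hw : d.-primitive_root w).
Variable L : {vspace pvec d n}.
Variables (g h : 'I_n -> pvec d n).
Hypothesis Hgbasis : basis_of L [seq g (widen_ord (leq_subr k n) i) | i <- enum 'I_(n - k)].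
Hypothesis Hgh : forall i j, symp (g i) (h j) = (i == j)%:R.
Hypothesis Hgg : forall i j, symp (g i) (g j) = 0.
Hypothesis Hhh : forall i j, symp (h i) (h j) = 0.
Variable v0 : vec C d n.
Hypothesis Hv0unit : adj v0 *m v0 = 1%:M.
Hypothesis Hv0stab : forall i, Nop (d:=d) (n:=n) w (g i) *m v0 = v0.
Variable Pi : 'rV['F_d]_(n - k) -> op C d n.
Hypothesis HPi : forall s, orth_proj_onto (Pi s)
                     (fun v => exists l, codel s l /\ v = ketl w h v0 l).
Local Notation NOP := (Nop (d:=d) (n:=n) w).
Local Notation e := (ketl w h v0).

Definition codelb (s : 'rV['F_d]_(n - k)) (l : 'rV['F_d]_n) :=
  [forall i, l 0 (widen_ord (leq_subr k n) i) == s 0 i].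

Lemma codelP s l : reflect (codel s l) (codelb s l).
Proof. by apply: (iffP forallP) => H i; apply/eqP. Qed.

Lemma Pi_e s l : codelb s l -> Pi s *m e l = e l.
Proof. move=> /codelP H; apply: (HPi s).1; by exists l. Qed.

Lemma Pi_sum s : Pi s = \sum_(l | codelb s l) e l *m adj (e l).
Proof.
rewrite -[Pi s]mulmx1 -(complete Hd Hw Hgh Hv0unit Hv0stab) mulmx_sumr.
rewrite (bigID (codelb s)) /= [X in _ + X]big1 ?addr0.
  by apply: eq_bigr => l Hl; rewrite mulmxA Pi_e.
move=> l Hl; rewrite mulmxA (HPi s).2 ?mul0mx // => v [l' [Hl' ->]].
apply: (e_orth Hd Hw Hgh Hv0stab).
by apply: contraNneq Hl => ->; apply/codelP.
Qed.

Lemma Pi_adj s : adj (Pi s) = Pi s.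
Proof.
rewrite Pi_sum hadj_sum; apply: eq_bigr => l _.
by rewrite hadjM hadjK.
Qed.

Let nE : (n - k + k)%N = n := subnK Hk.
Definition iot (s : 'rV['F_d]_(n - k)) (u : 'rV['F_d]_k) : 'rV['F_d]_n :=
  \row_j (match split (cast_ord (esym nE) j) with inl i => s 0 i | inr i => u 0 i end).
Definition rj (i : 'I_k) : 'I_n := cast_ord nE (rshift (n - k) i).

Lemma iot_w s u i : iot s u 0 (widen_ord (leq_subr k n) i) = s 0 i.
Proof.
rewrite mxE; have -> : cast_ord (esym nE) (widen_ord (leq_subr k n) i) = lshift k i.
  by apply: val_inj.
by rewrite -[lshift k i]/(unsplit (inl i)) unsplitK.
Qed.
Lemma iot_r s u i : iot s u 0 (rj i) = u 0 i.
Proof.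
rewrite mxE; have -> : cast_ord (esym nE) (rj i) = rshift (n - k) i.
  by apply: val_inj.
by rewrite -[rshift (n - k) i]/(unsplit (inr i)) unsplitK.
Qed.
Lemma iot_code s u : codelb s (iot s u).
Proof. by apply/forallP => i; rewrite iot_w. Qed.
Lemma iot_inj s : injective (iot s).
Proof.
move=> u u' E; apply/rowP => i; by rewrite -!(iot_r s) E.
Qed.
Lemma iot_surj s l : codelb s l -> l = iot s (\row_i l 0 (rj i)).
Proof.
move=> /forallP Hl; apply/rowP => j; rewrite mxE.
case: (splitP (cast_ord (esym nE) j)) => i /= Hi.
  have -> : j = widen_ord (leq_subr k n) i by apply: val_inj.
  exact/eqP/Hl.
by rewrite mxE; congr (l 0 _); apply: val_inj; rewrite /= Hi.
Qed.

Lemma card_code s : #|[pred l | codelb s l]| = (d ^ k)%N.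
Proof.
have -> : #|[pred l | codelb s l]| = #|[set iot s u | u in 'rV['F_d]_k]|.
  apply: eq_card => l; rewrite inE; apply/idP/imsetP.
    by move=> Hl; exists (\row_i l 0 (rj i)); rewrite ?inE // -iot_surj.
  by case=> u _ ->; apply: iot_code.
by rewrite card_imset; [rewrite card_mx (card_Fp Hd) mul1n | exact: iot_inj].
Qed.

Definition chi (a : 'I_n -> 'F_d) (l : 'rV['F_d]_n) := \prod_j eps w (l 0 j) ^+ val (a j).

Lemma norm_chi a l : `|chi a l| = 1.
Proof. rewrite /chi normr_prod big1 // => j _; by rewrite normrX (norm_eps Hd Hw) expr1n. Qed.

Lemma K_val s (y : pvec d n) :
  `|\sum_(l | codelb s l) (adj (e l) *m NOP y *m e l) 0 0| = (d ^ k)%:R * (y \in L)%:R.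
Proof.
case: (boolP [forall j, symp (g j) y == 0]) => Hsig; last first.
  have yL : y \notin L by rewrite (inL Hgh Hgg Hhh Hgbasis) (negbTE Hsig).
  rewrite (negbTE yL) mulr0 big1 ?normr0 // => l _.
  rewrite -mulmxA (Nop_e Hd Hw Hgh Hv0unit Hv0stab) mulmxA.
  rewrite (e_orth Hd Hw Hgh Hv0stab) ?mul0mx ?mxE //.
  apply: contra Hsig => /eqP E; apply/forallP => j.
  have : (l + sig g y) 0 j = l 0 j by rewrite E.
  by rewrite !mxE -{2}[l 0 j]addr0 => /addrI ->.
pose a j := symp y (h j).
have Ey : y = \sum_j a j *: g j.
  rewrite {1}(decomp Hgh Hgg Hhh y) [X in _ + X]big1 ?addr0 // => j _.
  by move/forallP: Hsig => /(_ j) /eqP ->; rewrite scale0r.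
have [c Hc Hprod] := Nop_prodg Hd Hw g (index_enum 'I_n) a.
rewrite -Ey in Hprod.
have c0 : c != 0 by rewrite -normr_eq0 Hc oner_eq0.
have HNy : NOP y = c^-1 *: \prod_j NOP (g j) ^+ val (a j).
  by rewrite Hprod scalerA mulVf ?scale1r.
have term : forall l, (adj (e l) *m NOP y *m e l) 0 0 = c^-1 * chi a l.
  move=> l; rewrite HNy -scalemxAr -scalemxAl -mulmxA (prod_e Hd Hw Hgh Hv0stab).
  rewrite -scalemxAr (e_norm Hd Hw h Hv0unit) !mxE eqxx mulr1 //.
under eq_bigr => l _ do rewrite term.
rewrite -mulr_sumr normrM normfV Hc invr1 mul1r.
case: (boolP [forall j : 'I_n, (n - k <= j)%N ==> (a j == 0)]) => Ha.
  have yL : y \in L by rewrite (inL Hgh Hgg Hhh Hgbasis) Hsig.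
  rewrite yL mulr1.
  have Hl0 := iot_code s 0.
  rewrite (eq_bigr (fun _ => chi a (iot s 0))).
    have -> : \sum_(l | codelb s l) chi a (iot s 0) = \sum_(l in [pred l | codelb s l]) chi a (iot s 0).
      by apply: eq_bigl.
    by rewrite sumr_const normrMn norm_chi card_code.
  move=> l Hl; apply: eq_bigr => j _.
  case: (ltnP j (n - k)) => Hj.
    have -> : j = widen_ord (leq_subr k n) (Ordinal Hj) by apply: val_inj.
    by rewrite iot_w; move/forallP: Hl => /(_ (Ordinal Hj)) /eqP ->.
  by move/forallP: Ha => /(_ j) /implyP /(_ Hj) /eqP ->; rewrite !expr0.
have yL : y \notin L by rewrite (inL Hgh Hgg Hhh Hgbasis) Hsig.
rewrite (negbTE yL) mulr0.
move/forallPn: Ha => [j0]; rewrite negb_imply => /andP [Hj0 Haj0].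
pose dl : 'rV['F_d]_n := \row_j ((j == j0)%:R).
have Hinv : forall l, codelb s (l + dl) = codelb s l.
  move=> l; apply: eq_forallb => i; rewrite !mxE.
  suff -> : (widen_ord (leq_subr k n) i == j0) = false by rewrite addr0.
  by apply/negbTE; apply: contraTneq Hj0 => <- /=; rewrite -ltnNge.
have Hchi : forall l, chi a (l + dl) = w ^+ val (a j0) * chi a l.
  move=> l; rewrite /chi.
  under eq_bigr => j _ do rewrite !mxE (epsD Hd Hw) exprMn.
  rewrite big_split /= mulrC; congr (_ * _).
  rewrite (bigD1 j0) //= eqxx (eps1 d w) big1 ?mulr1 // => j Hj.
  by rewrite (negbTE Hj) eps0 expr1n.
set S := \sum_(l | codelb s l) chi a l.
have ES : S = w ^+ val (a j0) * S.
  rewrite {1}/S (reindex_inj (addIr dl)) /=.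
  rewrite (eq_bigl (fun l => codelb s l)) => [|l]; last exact: Hinv.
  by rewrite mulr_sumr; apply: eq_bigr => l _; rewrite Hchi.
have w1 : w ^+ val (a j0) != 1 by rewrite -/(eps w (a j0)) (eps_eq1 Hd Hw).
suff -> : S = 0 by rewrite normr0.
apply/eqP; move/eqP: ES; rewrite -subr_eq0 -{1}[S]mul1r -mulrBl mulf_eq0.
by rewrite subr_eq0 eq_sym (negbTE w1).
Qed.

Variable xhat : 'rV['F_d]_(n - k) -> pvec d n.
Hypothesis Hxhat : forall t i, symp (g (widen_ord (leq_subr k n) i)) (xhat t) = t 0 i.

Lemma T_val s t (x : pvec d n) :
  `|\tr (Pi s *m (adj (NOP (xhat t)) *m Pi (t + s) *m NOP x))| =
  (d ^ k)%:R * (x - xhat t \in L)%:R.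
Proof.
set xh := xhat t.
have Hadj : adj (NOP xh) = (cmulN w (- xh) xh)^-1 *: NOP (- xh).
  have E1 := Nop_mul Hd Hw (- xh) xh; rewrite addNr (Nop0 _ Hd Hw) in E1.
  have E2 : NOP (- xh) = cmulN w (- xh) xh *: adj (NOP xh).
    by rewrite -[NOP (- xh)]mulmx1 -(Nop_unit' Hd Hw xh) mulmxA E1 -scalemxAl mul1mx.
  by rewrite E2 scalerA mulVf ?scale1r // (cmulN_neq0 Hd Hw).
pose gam := (cmulN w (- xh) xh)^-1 * cmulN w (- xh) x.
have HM : adj (NOP xh) *m NOP x = gam *: NOP (x - xh).
  by rewrite Hadj -scalemxAl (Nop_mul Hd Hw) scalerA addrC.
have Hgam : `|gam| = 1 by rewrite normrM normfV !(norm_cmulN Hd Hw) invr1 mulr1.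
rewrite Pi_sum mulmx_suml raddf_sum.
rewrite (eq_bigr (fun l => gam * (adj (e l) *m NOP (x - xh) *m e l) 0 0)).
  by rewrite -mulr_sumr normrM Hgam mul1r K_val.
move=> l Hl.
change (\tr (e l *m adj (e l) *m (adj (NOP xh) *m Pi (t + s) *m NOP x)) = gam * (adj (e l) *m NOP (x - xh) *m e l) 0 0).
rewrite -mulmxA mxtrace_mulC trace_mx11.
have HP : Pi (t + s) *m (NOP xh *m e l) = NOP xh *m e l.
  rewrite (Nop_e Hd Hw Hgh Hv0unit Hv0stab) mulmxA Pi_e //.
  apply/forallP => i; rewrite !mxE /xh Hxhat addrC.
  by move/forallP: Hl => /(_ i) /eqP ->.
have HP' : adj (NOP xh *m e l) *m Pi (t + s) = adj (NOP xh *m e l).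
  by rewrite -{1}(Pi_adj (t + s)) -hadjM HP.
rewrite !mulmxA -hadjM HP' hadjM -(mulmxA (adj (e l))) HM.
by rewrite -scalemxAr -!scalemxAl mxE.
Qed.

Variable P : pvec d n -> C.
Hypothesis HP0 : forall x, 0 <= P x.

Lemma main_sec s t :
  Fe ((d ^ k)%:R^-1 *: Pi s)
     (kcomp (fun _ : unit => adj (NOP (xhat t)) *m Pi (t + s)) (pauli_kraus w P))
  = \sum_(x | x - xhat t \in L) P x.
Proof.
rewrite /Fe /kcomp /pauli_kraus.
rewrite (reindex (fun x : pvec d n => (tt, x))) /=; last first.
  by apply: onW_bij; exists snd => // [[[] x]].
rewrite [RHS]big_mkcond /=; apply: eq_bigr => x _.
rewrite -!scalemxAr -scalemxAl !mxtraceZ !normrM !exprMn T_val.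
have d0 : ((d ^ k)%:R : C) != 0 by rewrite pnatr_eq0 -lt0n expn_gt0 (prime_gt0 Hd).
rewrite ger0_norm ?sqrtC_ge0 // sqrtCK ger0_norm ?invr_ge0 ?ler0n //.
case: ifP => _; last by rewrite mulr0 expr0n /= !mulr0.
by rewrite mulr1 -exprMn mulVf // expr1n mulr1.
Qed.
End Main.

Theorem lemma2
  (C : numClosedFieldType) (d n k : nat) (w : C)
  (Hd : prime d) (Hn : (1 <= n)%N) (Hk : (k <= n)%N)
  (Hw : d.-primitive_root w)
  (L : {vspace pvec d n})
  (HLiso : forall x y, x \in L -> y \in L -> symp x y = 0)
  (HLdim : \dim L = (n - k)%N)
  (g h : 'I_n -> pvec d n)
  (Hgbasis : basis_of L [seq g (widen_ord (leq_subr k n) i) | i <- enum 'I_(n - k)])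
  (Hgh : forall i j, symp (g i) (h j) = (i == j)%:R)
  (Hgg : forall i j, symp (g i) (g j) = 0)
  (Hhh : forall i j, symp (h i) (h j) = 0)
  (v0 : vec C d n)
  (Hv0unit : adj v0 *m v0 = 1%:M)
  (Hv0stab : forall i, Nop w (g i) *m v0 = v0)
  (Pi : 'rV['F_d]_(n - k) -> op C d n)
  (HPi : forall s, orth_proj_onto (Pi s)
                     (fun v => exists l, codel s l /\ v = ketl w h v0 l))
  (xhat : 'rV['F_d]_(n - k) -> pvec d n)
  (Hxhat : forall t i, symp (g (widen_ord (leq_subr k n) i)) (xhat t) = t 0 i)
  (P : pvec d n -> C)
  (HP0 : forall x, 0 <= P x) (HP1 : \sum_x P x = 1)
  (s t : 'rV['F_d]_(n - k)) :
  Fe ((d ^ k)%:R^-1 *: Pi s)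
     (kcomp (fun _ : unit => adj (Nop w (xhat t)) *m Pi (t + s)) (pauli_kraus w P))
  = \sum_(x | x - xhat t \in L) P x.
Proof.
exact: (main_sec Hd Hk Hw Hgbasis Hgh Hgg Hhh Hv0unit Hv0stab HPi Hxhat HP0 s t).
Qed.
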